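(* If $Z\subseteq A^+$ is an alt-induced code, then $Z^n$ is an alt-induced code for every integer $n\ge1$.
   Context: $A$ is a finite alphabet, $A^+$ the set of non-empty words; $Z^1=Z$, $Z^{n+1}=Z^nZ$ where $XY=\{xy:x\in X,y\in Y\}$. A set $Z\subseteq A^+$ is a code if every word admits at most one factorization into words of $Z$. For non-empty $X,Y\subseteq A^+$, $(X,Y)$ is an alternative code if no word of $A^+$ admits two different similar alternative factorizations on $(X,Y)$ (factorizations $u_1\cdots u_n$, $n\ge2$, $u_i\in X\cup Y$, alternating between $X$ and $Y$; similar = beginning in the same set and ending in the same set); equivalently, $XY$ is a code and the product $XY$ is unambiguous (each element of $XY$ has exactly one factorization $xy$ with $x\in X,y\in Y$). $Z$ is an alt-induced code if $Z=XY$ for some alternative code $(X,Y)$. *)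

(* Defs.v *)
From mathcomp Require Import all_boot.
Set Implicit Arguments. Unset Strict Implicit. Unset Printing Implicit Defensive.

Definition lang (A : finType) := seq A -> Prop.

Definition in_Aplus (A : finType) (Z : lang A) := forall w, Z w -> w <> [::].

Definition lprod (A : finType) (X Y : lang A) : lang A :=
  fun w => exists x y, X x /\ Y y /\ w = x ++ y.

Fixpoint lpow (A : finType) (Z : lang A) (n : nat) : lang A :=
  match n with
  | 0 => fun w => w = [::]
  | 1 => Z
  | m.+1 => lprod (lpow Z m) Z
  end.

(* u = [:: u_0; ...; u_{n-1}] is an alternative factorization on (X,Y)
   beginning in X (b = false) or in Y (b = true): n >= 2 and the factors
   alternate between X and Y.  The word factorized is [flatten u]. *)
Definition alt_fact (A : finType) (X Y : lang A) (b : bool) (u : seq (seq A)) :=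
  1 < size u /\
  forall i, i < size u -> (if b (+) odd i then Y else X) (nth [::] u i).

(* (X,Y) is an alternative code: X, Y nonempty subsets of A^+, and no word
   admits two different similar alternative factorizations (similar = same
   starting set and same ending set; with the same starting set, the ending
   set is determined by the parity of the number of factors). *)
Definition alt_code (A : finType) (X Y : lang A) :=
  (exists x, X x) /\ (exists y, Y y) /\ in_Aplus X /\ in_Aplus Y /\
  forall (b : bool) (u v : seq (seq A)),
    alt_fact X Y b u -> alt_fact X Y b v ->
    odd (size u) = odd (size v) ->
    flatten u = flatten v -> u = v.

Definition alt_induced_code (A : finType) (Z : lang A) :=
  exists X Y : lang A, alt_code X Y /\ forall w, Z w <-> lprod X Y w.

(* Main.v *)
Require Import Defs.
From mathcomp Require Import all_boot.
From mathcomp Require Import zify.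

Set Implicit Arguments. Unset Strict Implicit. Unset Printing Implicit Defensive.

Section Aux.
Variable A : finType.

Fixpoint altP (X Y : lang A) (b : bool) (s : seq (seq A)) : Prop :=
  match s with
  | [::] => True
  | a :: t => (if b then Y else X) a /\ altP X Y (~~ b) t
  end.

Lemma altP_nth X Y b s : altP X Y b s <->
  forall i, i < size s -> (if b (+) odd i then Y else X) (nth [::] s i).
Proof.
elim: s b => [|a t IH] b /=; first by split.
rewrite IH; split.
- move=> [Ha Ht] [|i] /=; first by rewrite addbF.
  rewrite ltnS => Hi; have := Ht i Hi; by rewrite addbN -addNb.
- move=> H; split; first by have := H 0 isT; rewrite addbF.
  move=> i Hi; have := H i.+1 Hi; by rewrite /= addbN -addNb.
Qed.

Lemma altP_cat X Y b s t : altP X Y b (s ++ t) <->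
  altP X Y b s /\ altP X Y (b (+) odd (size s)) t.
Proof.
elim: s b => [|a s IH] b /=; first by rewrite addbF; split; [|case].
rewrite IH addbN -addNb.
by split => [[? [? ?]]|[[? ?] ?]].
Qed.

Variables X Y : lang A.
Variable m : nat.

Definition Yp : lang A := fun w =>
  exists s, [/\ size s = m.*2.+1, altP X Y true s & w = flatten s].

Fixpoint Exp (b : bool) (u : seq (seq A)) (U : seq (seq A)) : Prop :=
  match u with
  | [::] => U = [::]
  | a :: t => if b then exists s U', [/\ size s = m.*2.+1, altP X Y true s,
                   a = flatten s, U = s ++ U' & Exp false t U']
              else exists U', [/\ X a, U = a :: U' & Exp true t U']
  end.

Lemma Exp_ex b u : altP X Yp b u -> exists U, Exp b u U.
Proof.
elim: u b => [|a t IH] b /=; first by exists [::].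
case: b => [[[s [Hs Hsa ->]] Ht] | [Ha Ht]].
- have [U' HU'] := IH _ Ht. by exists (s ++ U'), s, U'; split.
- have [U' HU'] := IH _ Ht. by exists (a :: U'), U'; split.
Qed.

Lemma Exp_prop b u U : Exp b u U ->
  [/\ altP X Y b U, flatten U = flatten u, odd (size U) = odd (size u)
    & size u <= size U].
Proof.
elim: u b U => [|a t IH] b U /=; first by move->.
case: b => [[s [U' [Hs Hsa Ha -> HE]]] | [U' [Ha -> HE]]].
- have [H1 H2 H3 H4] := IH _ _ HE. split.
  + apply/altP_cat; split => //; by rewrite Hs /= odd_double.
  + by rewrite flatten_cat H2 Ha.
  + by rewrite size_cat oddD Hs /= odd_double H3.
  + rewrite size_cat Hs; lia.
- have [H1 H2 H3 H4] := IH _ _ HE. split => //=.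
  + by rewrite H2.
  + by rewrite H3.
Qed.

Lemma Exp_inj b u v U : Exp b u U -> Exp b v U -> u = v.
Proof.
elim: u b v U => [|a t IH] b [|a' t'] U /=.
- done.
- move=> ->. case: b => [[s [U' [Hs _ _ HU _]]]|[U' [_ HU _]]] //.
  by case: s Hs HU.
- move=> H HU; subst U; move: H. case: b => [[s [U' [Hs _ _ HU _]]]|[U' [_ HU _]]] //.
  by case: s Hs HU.
- case: b => [[s [U' [Hs _ Ha HU HE]]] [s' [U'' [Hs' _ Ha' HU' HE']]] |
              [U' [_ HU HE]] [U'' [_ HU' HE']]].
  + move: HU'; rewrite HU => /eqP; rewrite eqseq_cat ?Hs ?Hs' //.
    move=> /andP [/eqP Es /eqP EU]; subst.
    by rewrite (IH _ _ _ HE HE').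
  + rewrite HU in HU'; case: HU' => <- EU; subst.
    by rewrite (IH _ _ _ HE HE').
Qed.

Lemma alt_code_Yp : alt_code X Y -> alt_code X Yp.
Proof.
move=> [[x Hx] [[y Hy] [HX [HY Huniq]]]].
split; first by exists x.
split.
  exists (flatten (mkseq (fun i => if odd i then x else y) m.*2.+1)).
  exists (mkseq (fun i => if odd i then x else y) m.*2.+1).
  split => //; first by rewrite size_mkseq.
  apply/altP_nth => i; rewrite size_mkseq => Hi; rewrite nth_mkseq //.
  by case: (odd i).
split; first done.
split.
  move=> w [s [Hs Hst ->]]. case: s Hs Hst => [|a s] //= _ [Ha _].
  apply HY in Ha. by case: a Ha.
move=> b u v [Hu2 Hu] [Hv2 Hv] Hodd Hfl.
have [U HU] := Exp_ex (iffRL (altP_nth _ _ _ _) Hu).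
have [V HV] := Exp_ex (iffRL (altP_nth _ _ _ _) Hv).
have [UA UF UO US] := Exp_prop HU.
have [VA VF VO VS] := Exp_prop HV.
apply: (Exp_inj HU). suff -> : U = V by [].
apply: (Huniq b).
- split; [exact: leq_trans Hu2 US | exact/altP_nth].
- split; [exact: leq_trans Hv2 VS | exact/altP_nth].
- by rewrite UO VO.
- by rewrite UF VF.
Qed.

Variable Z : lang A.
Hypothesis HZ : forall w, Z w <-> lprod X Y w.

Lemma lpow_alt k w : lpow Z k.+1 w <->
  exists s, [/\ size s = k.+1.*2, altP X Y false s & w = flatten s].
Proof.
elim: k w => [|k IH] w.
- rewrite /= HZ. split.
  + move=> [x [y [Hx [Hy ->]]]]. exists [:: x; y]; split => //=.
    by rewrite cats0.
  + move=> [s [Hs Has ->]]; case: s Hs Has => [|x [|y [|? ?]]] //= _ [Hx [Hy _]].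
    by exists x, y; rewrite cats0.
- rewrite [lpow Z k.+2 w]/=. split.
  + move=> [a [c [/IH [s [Hs Hsa ->]] [/HZ [x [y [Hx [Hy ->]]]] ->]]]].
    exists (s ++ [:: x; y]). split.
    * by rewrite size_cat Hs addn2.
    * apply/altP_cat; split => //; rewrite Hs odd_double /=; by [].
    * by rewrite flatten_cat /= cats0.
  + move=> [s' [Hs Hsa ->]].
    rewrite -(cat_take_drop k.+1.*2 s') in Hsa *.
    move/altP_cat: Hsa => [H1 H2].
    have Ht : size (take k.+1.*2 s') = k.+1.*2.
      by apply: size_takel; rewrite Hs; lia.
    have Hd : size (drop k.+1.*2 s') = 2 by rewrite size_drop Hs; lia.
    rewrite Ht odd_double in H2.
    move: (drop _ _) Hd H2 => [|x [|y [|? ?]]] //= _ [Hx [Hy _]].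
    exists (flatten (take k.+1.*2 s')), (x ++ y). split.
      apply/IH; exists (take k.+1.*2 s'); by split.
    split; first by apply/HZ; exists x, y.
    by rewrite flatten_cat /= cats0.
Qed.

End Aux.

Theorem propositionL (A : finType) (Z : lang A) :
  alt_induced_code Z -> forall n : nat, 1 <= n -> alt_induced_code (lpow Z n).
Proof.
move=> [X [Y [Hc HZ]]] n Hn. case: n Hn => // m _.
exists X, (Yp X Y m). split; first exact: alt_code_Yp.
move=> w. rewrite (lpow_alt HZ). split.
- move=> [[|x s] [Hs Hsa ->]]; first by move: Hs; rewrite doubleS.
  move: Hs Hsa; rewrite doubleS /= => -[Hs] [Hx Hsa].
  exists x, (flatten s); split => //; split => //. by exists s.
- move=> [x [y [Hx [[s [Hs Hsa ->]] ->]]]]. exists (x :: s); split => //=.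
  by rewrite Hs doubleS.
Qed.
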